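(* Let $\delta$ satisfy the Kalmanson conditions with respect to $\pi=(x_1,\dots,x_n)$, let $C_1,\dots,C_m$ ($m\ge3$) be a partition of $X$ into consecutive intervals of $\pi$ in this order, and let $\mu$ be a block weighting. Then for every $1\le i$ with $i+2\le m$, \[Q_\delta(C_i,C_{i+2})-Q_\delta(C_i,C_{i+1})\ge0.\]
   Context: $X=\{1,\dots,n\}$. A dissimilarity map is $\delta:X\times X\to\mathbb{R}$ with $\delta(i,j)=\delta(j,i)\ge0$, $\delta(i,i)=0$. A circular ordering is a listing $\pi=(x_1,\dots,x_n)$ of $X$ regarded cyclically. $\delta$ satisfies the Kalmanson conditions with respect to $\pi$ if for all $1\le i<j<k<l\le n$: $\delta(x_i,x_j)+\delta(x_k,x_l)\le\delta(x_i,x_k)+\delta(x_j,x_l)$ and $\delta(x_i,x_l)+\delta(x_j,x_k)\le\delta(x_i,x_k)+\delta(x_j,x_l)$. The partition into consecutive intervals means $C_1=\{x_1,\dots,x_{a_1}\}$, $C_2=\{x_{a_1+1},\dots,x_{a_2}\},\dots,C_m=\{x_{a_{m-1}+1},\dots,x_n\}$. A block weighting is $\mu:X\to\mathbb{R}_{\ge0}$ with $\sum_{x\in C_r}\mu(x)=1$ for every $r$. Set $\delta(C_r,C_s)=\sum_{x\in C_r,y\in C_s}\mu(x)\mu(y)\delta(x,y)$ and $Q_\delta(C_r,C_s)=(m-2)\delta(C_r,C_s)-\sum_{t\ne r}\delta(C_r,C_t)-\sum_{t\ne s}\delta(C_s,C_t)$. *)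

(* Defs.v *)
From HB Require Import structures.
From mathcomp Require Import all_boot all_order all_algebra.
From mathcomp Require Import fingroup perm.
Set Implicit Arguments. Unset Strict Implicit. Unset Printing Implicit Defensive.
Import Order.TTheory GRing.Theory Num.Theory.
Local Open Scope ring_scope.

(* X = {1..n} is represented by 'I_n.  A circular ordering pi = (x_1,...,x_n)
   is a permutation pi : {perm 'I_n}; x_{p+1} = pi p (positions 0-indexed). *)

Definition dissimilarity (R : realFieldType) (n : nat) (d : 'I_n -> 'I_n -> R) :=
  (forall x y, d x y = d y x) /\ (forall x y, 0 <= d x y) /\ (forall x, d x x = 0).

Definition kalmanson (R : realFieldType) (n : nat) (d : 'I_n -> 'I_n -> R)
  (pi : {perm 'I_n}) :=
  forall i j k l : 'I_n, (i < j)%N -> (j < k)%N -> (k < l)%N ->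
    d (pi i) (pi j) + d (pi k) (pi l) <= d (pi i) (pi k) + d (pi j) (pi l) /\
    d (pi i) (pi l) + d (pi j) (pi k) <= d (pi i) (pi k) + d (pi j) (pi l).

(* Consecutive intervals: breakpoints a 0 = 0 < a 1 < ... < a m = n,
   block C_r (1 <= r <= m) = {pi p | a (r-1) <= p < a r}. *)
Definition interval_partition (n m : nat) (a : nat -> nat) :=
  a 0%N = 0%N /\ a m = n /\ (forall r, (r < m)%N -> (a r < a r.+1)%N).

Definition inblock (n : nat) (pi : {perm 'I_n}) (a : nat -> nat) (r : nat)
  (x : 'I_n) : bool :=
  (a r.-1 <= (pi^-1)%g x)%N && ((pi^-1)%g x < a r)%N.

Definition block_weighting (R : realFieldType) (n m : nat) (pi : {perm 'I_n})
  (a : nat -> nat) (mu : 'I_n -> R) :=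
  (forall x, 0 <= mu x) /\
  (forall r, (1 <= r <= m)%N -> \sum_(x | inblock pi a r x) mu x = 1).

Definition blockdist (R : realFieldType) (n : nat) (d : 'I_n -> 'I_n -> R)
  (pi : {perm 'I_n}) (a : nat -> nat) (mu : 'I_n -> R) (r s : nat) : R :=
  \sum_(x | inblock pi a r x) \sum_(y | inblock pi a s y) mu x * mu y * d x y.

Definition Qdelta (R : realFieldType) (n m : nat) (d : 'I_n -> 'I_n -> R)
  (pi : {perm 'I_n}) (a : nat -> nat) (mu : 'I_n -> R) (r s : nat) : R :=
  (m - 2)%:R * blockdist d pi a mu r s
  - \sum_(1 <= t < m.+1 | t != r) blockdist d pi a mu r t
  - \sum_(1 <= t < m.+1 | t != s) blockdist d pi a mu s t.

(* Main.v *)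
Require Import Defs.
From HB Require Import structures.
From mathcomp Require Import all_boot all_order all_algebra.
From mathcomp Require Import fingroup perm.
From mathcomp Require Import zify ring lra.
Import Order.TTheory GRing.Theory Num.Theory.
Local Open Scope ring_scope.

Section Aux.
Variables (R : realFieldType) (n m : nat) (d : 'I_n -> 'I_n -> R)
  (pi : {perm 'I_n}) (a : nat -> nat) (mu : 'I_n -> R).
Hypothesis Hd : dissimilarity d.
Hypothesis Hk : kalmanson d pi.
Hypothesis Hp : interval_partition n m a.
Hypothesis Hw : block_weighting m pi a mu.

Definition S r (f : 'I_n -> R) := \sum_(x | inblock pi a r x) mu x * f x.
Arguments S : simpl never.
Local Notation D := (blockdist d pi a mu).

Lemma S_const r c : (1 <= r <= m)%N -> S r (fun _ => c) = c.
Proof. by move=> hr; rewrite /S -big_distrl /= (proj2 Hw r hr) mul1r. Qed.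

Lemma S_ext r f g : (forall x, f x = g x) -> S r f = S r g.
Proof. by move=> h; apply: eq_bigr => x _; rewrite h. Qed.

Lemma S_add r f g : S r f + S r g = S r (fun x => f x + g x).
Proof. by rewrite /S -big_split; apply: eq_bigr => x _; rewrite mulrDr. Qed.

Lemma S_le r f g : (forall x, inblock pi a r x -> f x <= g x) -> S r f <= S r g.
Proof.
move=> h; rewrite /S; apply: ler_sum => x hx; apply: ler_wpM2l.
  exact: (proj1 Hw). exact: h.
Qed.

Lemma D_S r s : D r s = S r (fun x => S s (fun y => d x y)).
Proof.
rewrite /blockdist /S; apply: eq_bigr => x _; rewrite big_distrr.
by apply: eq_bigr => y _ /=; rewrite mulrA.
Qed.

Lemma Dsym r s : D r s = D s r.
Proof.
rewrite /blockdist exchange_big; apply: eq_bigr => y _; apply: eq_bigr => x _.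
by rewrite (mulrC (mu x)) (proj1 Hd).
Qed.

Lemma a_mono p q : (p <= q <= m)%N -> (a p <= a q)%N.
Proof.
elim: q => [|q IH] /andP[hpq hqm]; first by rewrite leqn0 in hpq; rewrite (eqP hpq).
case: (ltngtP p q.+1) hpq => // [hlt|->] _ //.
apply: leq_trans (IH _) (ltnW ((proj2 (proj2 Hp)) q hqm)).
by rewrite -ltnS hlt (ltnW hqm).
Qed.

Lemma blk_lt r s x y : (1 <= r)%N -> (r < s)%N -> (s <= m)%N ->
  inblock pi a r x -> inblock pi a s y -> ((pi^-1)%g x < (pi^-1)%g y)%N.
Proof.
move=> h1 hrs hsm /andP[_ hx] /andP[hy _].
apply: leq_trans hx (leq_trans _ hy); apply: a_mono.
apply/andP; split; first by rewrite -ltnS prednK // (leq_trans _ hrs).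
by rewrite (leq_trans (leq_pred _) hsm).
Qed.
Arguments blk_lt {r s x y}.

Definition Q4 A B C E (f : 'I_n -> 'I_n -> 'I_n -> 'I_n -> R) :=
  S A (fun x => S B (fun y => S C (fun z => S E (fun w => f x y z w)))).

Lemma Q4_add A B C E f g : Q4 A B C E f + Q4 A B C E g =
  Q4 A B C E (fun x y z w => f x y z w + g x y z w).
Proof.
rewrite /Q4 S_add; apply: S_ext => x; rewrite S_add; apply: S_ext => y.
rewrite S_add; apply: S_ext => z; by rewrite S_add.
Qed.

Lemma Q4_le A B C E f g :
  (forall x y z w, inblock pi a A x -> inblock pi a B y -> inblock pi a C z ->
     inblock pi a E w -> f x y z w <= g x y z w) ->
  Q4 A B C E f <= Q4 A B C E g.
Proof.
move=> h; apply: S_le => x hx; apply: S_le => y hy; apply: S_le => z hz.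
by apply: S_le => w hw; apply: h.
Qed.

Lemma quad A B C E : (1 <= A)%N -> (A < B)%N -> (B < C)%N -> (C < E)%N ->
  (E <= m)%N ->
  D A B + D C E <= D A C + D B E /\ D A E + D B C <= D A C + D B E.
Proof.
move=> h1 hab hbc hce hem.
have hA : (1 <= A <= m)%N by apply/andP; split => //; lia.
have hB : (1 <= B <= m)%N by apply/andP; split; lia.
have hC : (1 <= C <= m)%N by apply/andP; split; lia.
have hE : (1 <= E <= m)%N by apply/andP; split; lia.
have DAB : D A B = Q4 A B C E (fun x y _ _ => d x y).
  by rewrite /Q4 D_S; apply: S_ext => x; apply: S_ext => y; rewrite !S_const.
have DCE : D C E = Q4 A B C E (fun _ _ z w => d z w).
  by rewrite /Q4 D_S !S_const.
have DAC : D A C = Q4 A B C E (fun x _ z _ => d x z).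
  rewrite /Q4 D_S; apply: S_ext => x; rewrite S_const //.
  by apply: S_ext => z; rewrite S_const.
have DBE : D B E = Q4 A B C E (fun _ y _ w => d y w).
  rewrite /Q4 D_S S_const //; apply: S_ext => y; by rewrite S_const.
have DAE : D A E = Q4 A B C E (fun x _ _ w => d x w).
  by rewrite /Q4 D_S; apply: S_ext => x; rewrite !S_const.
have DBC : D B C = Q4 A B C E (fun _ y z _ => d y z).
  rewrite /Q4 D_S S_const //; apply: S_ext => y; apply: S_ext => z.
  by rewrite S_const.
rewrite DAB DCE DAC DBE DAE DBC !Q4_add; split; apply: Q4_le => x y z w hx hy hz hw.
  have := Hk _ _ _ _ (blk_lt h1 hab (ltnW (leq_trans hbc (ltnW (leq_trans hce hem)))) hx hy)
             (blk_lt (leq_trans h1 (ltnW hab)) hbc (ltnW (leq_trans hce hem)) hy hz)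
             (blk_lt (leq_trans h1 (ltnW (leq_trans hab (ltnW hbc)))) hce hem hz hw).
  by rewrite !permKV => -[].
have := Hk _ _ _ _ (blk_lt h1 hab (ltnW (leq_trans hbc (ltnW (leq_trans hce hem)))) hx hy)
           (blk_lt (leq_trans h1 (ltnW hab)) hbc (ltnW (leq_trans hce hem)) hy hz)
           (blk_lt (leq_trans h1 (ltnW (leq_trans hab (ltnW hbc)))) hce hem hz hw).
by rewrite !permKV => -[].
Qed.

End Aux.

Theorem mainTheorem7 (R : realFieldType) (n m : nat) (d : 'I_n -> 'I_n -> R)
  (pi : {perm 'I_n}) (a : nat -> nat) (mu : 'I_n -> R) :
  dissimilarity d -> kalmanson d pi ->
  (3 <= m)%N -> interval_partition n m a ->
  block_weighting m pi a mu ->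
  forall i : nat, (1 <= i)%N -> (i + 2 <= m)%N ->
    0 <= Qdelta m d pi a mu i (i + 2) - Qdelta m d pi a mu i i.+1.
Proof.
move=> Hd Hk hm Hp Hw i hi1 him.
have Ds := Dsym R n d pi a mu Hd.
have Q := quad _ _ _ _ _ _ _ Hk Hp Hw.
rewrite !addn2 in him *.
rewrite /Qdelta.
set D := blockdist d pi a mu in Ds Q *.
set c := D i i.+2 - D i i.+1.
pose k t := c + ((if t != i.+1 then D i.+1 t else 0) -
                 (if t != i.+2 then D i.+2 t else 0)).
have E1 : \sum_(1 <= t < m.+1) k t = c *+ m +
   (\sum_(1 <= t < m.+1 | t != i.+1) D i.+1 t -
    \sum_(1 <= t < m.+1 | t != i.+2) D i.+2 t).
  rewrite /k big_split sumr_const_nat subSS subn0 sumrB /=.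
  by congr (_ + (_ - _)); rewrite [RHS]big_mkcond.
have E2 : forall X, (m - 2)%:R * D i i.+2 - X - \sum_(1 <= t < m.+1 | t != i.+2) D i.+2 t -
   ((m - 2)%:R * D i i.+1 - X - \sum_(1 <= t < m.+1 | t != i.+1) D i.+1 t) =
   \sum_(1 <= t < m.+1) k t - c *+ 2.
  move=> X; rewrite E1 -[c *+ m]mulr_natr -[c *+ 2]mulr_natr natrB; last by lia.
  rewrite /c; ring.
rewrite E2 (big_cat_nat (n:=i.+1)) //; last by lia.
rewrite (big_ltn (m:=i.+1) (n:=m.+1)); last by lia.
rewrite (big_ltn (m:=i.+2) (n:=m.+1)); last by lia.
have P1 : 0 <= \sum_(1 <= t < i.+1) k t.
  rewrite big_nat_cond; apply: sumr_ge0 => t /andP[/andP[ht1 ht2] _].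
  rewrite /k /c.
  have -> : (t != i.+1) = true by lia.
  have -> : (t != i.+2) = true by lia.
  rewrite (Ds i.+1 t) (Ds i.+2 t).
  case: (ltngtP t i) => [hti|hit|->].
  - have [_ q] := Q t i i.+1 i.+2 ht1 hti (ltnSn _) (ltnSn _) him.
    lra.
  - lia.
  - lra.
have P2 : 0 <= \sum_(i.+3 <= t < m.+1) k t.
  rewrite big_nat_cond; apply: sumr_ge0 => t /andP[/andP[ht1 ht2] _].
  rewrite /k /c.
  have -> : (t != i.+1) = true by lia.
  have -> : (t != i.+2) = true by lia.
  have [q _] := Q i i.+1 i.+2 t hi1 (ltnSn _) (ltnSn _) ht1 (ht2 : (t <= m)%N).
  lra.
have P3 : k i.+1 + k i.+2 = c *+ 2.
  rewrite /k !eqxx /=.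
  have -> : (i.+1 != i.+2) = true by lia.
  have -> : (i.+2 != i.+1) = true by lia.
  rewrite (Ds i.+2 i.+1) mulr2n; ring.
rewrite /=; rewrite mulr2n in P3. lra.
Qed.
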